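(* Let $n$ decision-making units (DMUs), indexed by $J=\{1,\dots,n\}$, each use $m$ inputs (indexed by $I$) and produce $s$ outputs (indexed by $R$), with $n\ge 2(m+s)$ and all observed data $x_{ij}>0$, $y_{rj}>0$. Fix $o\in J$. For a goal price $\tau_o>0$, the TVG (primal) program of the PT model is $$\Delta_o^{PT}=\min_{v_o,u_o}\ \sum_{i\in I}v_{io}x_{io}-\sum_{r\in R}u_{ro}y_{ro}$$ subject to $\sum_{i\in I}v_{io}x_{ij}-\sum_{r\in R}u_{ro}y_{rj}\ge 0$ for all $j\in J$, $x_{io}v_{io}\ge\tau_o$ for all $i\in I$, $y_{ro}u_{ro}\ge\tau_o$ for all $r\in R$, with $v_o,u_o$ free. Let $(v_o^\#,u_o^\#)$ be an optimal solution for $\tau_o=1$ (Step I), put $\bar t=1/\sum_{i}v^\#_{io}x_{io}$ and let $(v_o^\star,u_o^\star)=\bar t\,(v_o^\#,u_o^\#)$ be the Step II solution (goal price $\tau_o=\bar t$). Let $\alpha_o^\star=\sum_i v^\star_{io}x_{io}$, $\beta_o^\star=\sum_r u^\star_{ro}y_{ro}$, and define the PT efficiency $E_o^{PT\star}=\beta_o^\star/\alpha_o^\star$ and PT inefficiency $F_o^{PT\star}=1-E_o^{PT\star}=(\alpha_o^\star-\beta_o^\star)/\alpha_o^\star$. Then $0\le E_o^{PT\star}\le 1$ and $0\le F_o^{PT\star}\le 1$.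
   Context: The associated TAP (dual) program of the PT model is $\max\sum_{i}Q_{io}\tau_o+\sum_r P_{ro}\tau_o$ subject to $\sum_{j}x_{ij}\pi_{jo}+Q_{io}x_{io}=x_{io}$ ($i\in I$), $-\sum_j y_{rj}\pi_{jo}+P_{ro}y_{ro}=-y_{ro}$ ($r\in R$), $\pi_o,Q_o,P_o\ge 0$. Quantities such as $v_{io}x_{io}$ are called virtual prices (in a virtual currency \$); $\alpha_o^\star$ and $\beta_o^\star$ are the pure virtual input and pure virtual output of the evaluated DMU-$o$. *)

(* Defs.v *)
From mathcomp Require Import all_boot all_order all_algebra.
Set Implicit Arguments. Unset Strict Implicit. Unset Printing Implicit Defensive.
Import Order.TTheory GRing.Theory Num.Theory.
Local Open Scope ring_scope.

Section PT.
Variables (R : realFieldType) (m s n : nat).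
Variables (x : 'I_m -> 'I_n -> R) (y : 'I_s -> 'I_n -> R) (o : 'I_n).

Definition vinput (v : 'I_m -> R) (j : 'I_n) : R := \sum_(i < m) v i * x i j.
Definition voutput (u : 'I_s -> R) (j : 'I_n) : R := \sum_(r < s) u r * y r j.

Definition TVG_obj (v : 'I_m -> R) (u : 'I_s -> R) : R := vinput v o - voutput u o.

Definition TVG_feasible (tau : R) (v : 'I_m -> R) (u : 'I_s -> R) : Prop :=
  [/\ (forall j : 'I_n, 0 <= vinput v j - voutput u j),
      (forall i : 'I_m, tau <= x i o * v i) &
      (forall r : 'I_s, tau <= y r o * u r)].

Definition TVG_optimal (tau : R) (v : 'I_m -> R) (u : 'I_s -> R) : Prop :=
  TVG_feasible tau v u /\
  forall v' u', TVG_feasible tau v' u' -> TVG_obj v u <= TVG_obj v' u'.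

Definition tbar (vs : 'I_m -> R) : R := 1 / vinput vs o.
Definition vstar (vs : 'I_m -> R) : 'I_m -> R := fun i => tbar vs * vs i.
Definition ustar (vs : 'I_m -> R) (us : 'I_s -> R) : 'I_s -> R :=
  fun r => tbar vs * us r.

Definition alpha_star (vs : 'I_m -> R) : R := vinput (vstar vs) o.
Definition beta_star (vs : 'I_m -> R) (us : 'I_s -> R) : R :=
  voutput (ustar vs us) o.

Definition E_PT (vs : 'I_m -> R) (us : 'I_s -> R) : R :=
  beta_star vs us / alpha_star vs.
Definition F_PT (vs : 'I_m -> R) (us : 'I_s -> R) : R := 1 - E_PT vs us.

End PT.

(* Main.v *)
Require Import Defs.
From mathcomp Require Import all_boot all_order all_algebra.
Import Order.TTheory GRing.Theory Num.Theory.
Local Open Scope ring_scope.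

Theorem theorem1 (R : realFieldType) (m s n : nat)
    (x : 'I_m -> 'I_n -> R) (y : 'I_s -> 'I_n -> R) (o : 'I_n)
    (hn : (2 * (m + s) <= n)%N)
    (hx : forall i j, 0 < x i j) (hy : forall r j, 0 < y r j)
    (vs : 'I_m -> R) (us : 'I_s -> R)
    (hopt : TVG_optimal x y o 1 vs us) :
  (0 <= E_PT x y o vs us <= 1) /\ (0 <= F_PT x y o vs us <= 1).
Proof.
case: hopt => [[hj hv hu] _].
set A := vinput x vs o.
set B := voutput y us o.
have hB : 0 <= B.
  rewrite /B /voutput; apply: sumr_ge0 => r _.
  have := hu r; have := hy r o => h1 h2.
  rewrite mulrC; apply: ltW; exact: lt_le_trans ltr01 h2.
have hAB : B <= A by rewrite -subr_ge0; exact: hj o.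
have hA : 0 <= A := le_trans hB hAB.
have Ea : alpha_star x o vs = A^-1 * A.
  rewrite /alpha_star /vinput /vstar /tbar -/A div1r mulr_sumr.
  by apply: eq_bigr => i _; rewrite mulrA.
have Eb : beta_star x y o vs us = A^-1 * B.
  rewrite /beta_star /voutput /ustar /tbar -/A div1r mulr_sumr.
  by apply: eq_bigr => i _; rewrite mulrA.
have HE : 0 <= E_PT x y o vs us <= 1.
  rewrite /E_PT Ea Eb.
  have [->|A0] := eqVneq A 0.
    by rewrite invr0 !mul0r lexx ler01.
  rewrite mulVf // divr1.
  apply/andP; split; first by rewrite mulr_ge0 // invr_ge0.
  have Ap : 0 < A by rewrite lt_def A0 hA.
  by rewrite mulrC ler_pdivrMr // mul1r.
split => //.
rewrite /F_PT; case/andP: HE => h0 h1.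
by rewrite subr_ge0 h1 lerBlDr lerDl h0.
Qed.
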